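(* Let $N\ge 2$, $d\ge 1$, $1\le p\le q\le\infty$, and let $\Sigma\subset\mathbb{Z}_N^d$ be a nonempty set for which a $(p,q)$-restriction estimate holds with constant $C_{p,q}>0$. Let $f:\mathbb{Z}_N^d\to\mathbb{C}$ be a nonzero function supported in $E\subset\mathbb{Z}_N^d$ whose Fourier transform $\hat f$ is supported in $\Sigma$. Then $$|E|^{1/p}\cdot|\Sigma|\ \ge\ \frac{N^d}{C_{p,q}}.$$
   Context: $\mathbb{Z}_N$ is the cyclic group of order $N$, $\chi(t)=e^{2\pi i t/N}$ for $t\in\mathbb{Z}_N$, and $x\cdot m=\sum_i x_im_i$ (mod $N$). The Fourier transform of $f:\mathbb{Z}_N^d\to\mathbb{C}$ is $\hat f(m)=N^{-d}\sum_{x\in\mathbb{Z}_N^d}\chi(-x\cdot m)f(x)$, so that $f(x)=\sum_{m}\chi(x\cdot m)\hat f(m)$ and $\sum_x|f(x)|^2=N^d\sum_m|\hat f(m)|^2$. ''Supported in $E$'' means $f(x)=0$ for $x\notin E$. A $(p,q)$-restriction estimate holds for a nonempty $S\subset\mathbb{Z}_N^d$ with constant $C_{p,q}$ if for every $g:\mathbb{Z}_N^d\to\mathbb{C}$, $$\Big(\frac{1}{|S|}\sum_{m\in S}|\hat g(m)|^q\Big)^{1/q}\le C_{p,q}\,N^{-d}\Big(\sum_{x\in\mathbb{Z}_N^d}|g(x)|^p\Big)^{1/p},$$ where for $q=\infty$ the left side means $\max_{m\in S}|\hat g(m)|$. *)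

(* Defs.v *)
From mathcomp Require Import all_boot all_order all_algebra.
From mathcomp Require Import all_classical all_reals all_analysis complex.
Set Implicit Arguments. Unset Strict Implicit. Unset Printing Implicit Defensive.
Import Order.TTheory GRing.Theory Num.Theory.
Local Open Scope ring_scope.

Definition ZNd (N d : nat) : finType := {ffun 'I_d -> 'I_N}.

(* x . m computed in nat; chi is N-periodic, so reduction mod N is irrelevant. *)
Definition dotZ (N d : nat) (x m : ZNd N d) : nat := (\sum_(i < d) (x i * m i))%N.

Definition chi (R : realType) (N : nat) (t : int) : R[i] :=
  Complex (cos (2 * pi * t%:~R / N%:R)) (sin (2 * pi * t%:~R / N%:R)).

Definition fourier (R : realType) (N d : nat) (f : ZNd N d -> R[i]) (m : ZNd N d) : R[i] :=
  (N%:R ^+ d)^-1 * \sum_(x : ZNd N d) chi R N (- (dotZ x m)%:Z) * f x.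

Definition cabs (R : realType) (z : R[i]) : R := Normc.normc z.

Definition lp_sum (R : realType) (T : finType) (p : \bar R) (h : T -> R) : R :=
  match p with
  | +oo%E => \big[Num.max/0]_(x : T) h x
  | EFin r => (\sum_(x : T) h x `^ r) `^ r^-1
  | -oo%E => 0
  end.

Definition lq_avg (R : realType) (T : finType) (q : \bar R) (S : {set T}) (h : T -> R) : R :=
  match q with
  | +oo%E => \big[Num.max/0]_(m in S) h m
  | EFin r => ((#|S|%:R)^-1 * \sum_(m in S) h m `^ r) `^ r^-1
  | -oo%E => 0
  end.

Definition restriction_estimate (R : realType) (N d : nat) (p q : \bar R)
    (S : {set ZNd N d}) (C : R) : Prop :=
  forall g : ZNd N d -> R[i],
    lq_avg q S (fun m => cabs (fourier g m))
      <= C * (N%:R ^+ d)^-1 * lp_sum p (fun x => cabs (g x)).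

Definition inv_exp (R : realType) (p : \bar R) : R :=
  match p with EFin r => r^-1 | _ => 0 end.

(* Main.v *)
Require Import Defs.
From mathcomp Require Import all_boot all_order all_algebra.
From mathcomp Require Import all_classical all_reals all_analysis complex.
From mathcomp Require Import ring lra zify.
Import Order.TTheory GRing.Theory Num.Theory.
Local Open Scope ring_scope.
Local Open Scope complex_scope.

Section C.
Context {R : realType}.

Lemma cabsE (z : R[i]) : `|z| = (cabs z)%:C.
Proof. by rewrite normc_def; case: z. Qed.

Lemma cabs_ge0 (z : R[i]) : 0 <= cabs z.
Proof. case: z => a b; exact: sqrtr_ge0. Qed.

Lemma cabsM (x y : R[i]) : cabs (x * y) = cabs x * cabs y.
Proof. exact: Normc.normcM. Qed.

Lemma cabs_sum (I : finType) (P : pred I) (F : I -> R[i]) :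
  cabs (\sum_(i | P i) F i) <= \sum_(i | P i) cabs (F i).
Proof.
rewrite -lecR -cabsE; apply: le_trans (ler_norm_sum _ _ _) _.
by rewrite rmorph_sum /=; apply: ler_sum => i _; rewrite cabsE.
Qed.

Lemma cabs_eq0 (z : R[i]) : (cabs z == 0) = (z == 0).
Proof.
apply/eqP/eqP => [|->]; first exact: Normc.eq0_normc.
exact: Normc.normc0.
Qed.

End C.
Section C2.
Context {R : realType}.
Variable N : nat.
Local Notation chi := (chi R N).

Lemma chiD a b : chi (a + b) = chi a * chi b.
Proof.
rewrite /chi rmorphD /= mulrDr mulrDl cosD sinD; simpc.
apply/eqP; rewrite eq_complex /=; apply/andP; split; apply/eqP; ring.
Qed.

Lemma chi0 : chi 0 = 1.
Proof. by rewrite /chi mulr0 mul0r cos0 sin0. Qed.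

Lemma cabs_chi a : cabs (chi a) = 1.
Proof. by rewrite /cabs /chi /= cos2Dsin2 sqrtr1. Qed.

Lemma chiN a : chi (- a) = (chi a)^-1.
Proof.
have h : chi (- a) * chi a = 1 by rewrite -chiD addNr chi0.
have ha : chi a != 0 by rewrite -(cabs_eq0 (chi a)) cabs_chi oner_eq0.
by apply: (mulIf ha); rewrite h mulVf.
Qed.

Lemma chiMn a n : chi (a *+ n) = chi a ^+ n.
Proof. by elim: n => [|n IH]; rewrite ?chi0 // mulrS chiD IH exprS. Qed.

Hypothesis N0 : (0 < N)%N.

Lemma chiNN : chi N%:Z = 1.
Proof.
rewrite /chi; have -> : ((N%:Z)%:~R : R) = N%:R by [].
rewrite mulfK; last by rewrite pnatr_eq0 -lt0n.
by rewrite mulr_natl cos2pi sin2pi.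
Qed.

Lemma chiXN (a : int) : chi a ^+ N = 1.
Proof.
rewrite -chiMn.
have hp : forall n : nat, chi (n%:Z *+ N) = 1.
  move=> n; have -> : n%:Z *+ N = N%:Z *+ n.
    by lia.
  by rewrite chiMn chiNN expr1n.
case: a => n; first exact: hp.
by rewrite NegzE mulNrn chiN hp invr1.
Qed.

Lemma chi_neq1 (k : nat) : (0 < k < N)%N -> chi k%:Z != 1.
Proof.
move=> /andP[k0 kN].
have Np : (0 : R) < N%:R by rewrite ltr0n.
have kp : (0 : R) < k%:R by rewrite ltr0n.
pose x : R := pi * k%:R / N%:R.
have x0 : 0 < x by rewrite divr_gt0 // mulr_gt0 // pi_gt0.
have xpi : x < pi.
  rewrite /x ltr_pdivrMr // ltr_pM2l ?pi_gt0 // ltr_nat //.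
have sx : 0 < sin x by apply: sin_gt0_pi; rewrite x0 xpi.
have -> : chi k%:Z = Complex (cos (x *+ 2)) (sin (x *+ 2)).
  rewrite /chi; have -> : ((k%:Z)%:~R : R) = k%:R by [].
  by rewrite /x mulr2n; congr (Complex (cos _) (sin _)); ring.
apply/negP => /eqP h.
have : cos (x *+ 2) = 1 by move: h => [].
rewrite cos_mulr2n cos2sin2 mulr2n => h2.
have : 0 < sin x ^+ 2 by rewrite exprn_gt0.
move: h2; generalize (sin x ^+ 2) => s h2 hs.
have : s *+ 2 = 0.
  by apply/eqP; rewrite -(subrr 1) -{2}h2 eq_sym mulr2n; apply/eqP; ring.
by move/eqP; rewrite mulrn_eq0 /= gt_eqF.
Qed.

Lemma sum1d (a : int) : (`|a| < N)%N ->
  \sum_(k < N) chi (a * (k : nat)%:Z) = if a == 0 then N%:R else 0.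
Proof.
move=> aN.
have e : forall k : 'I_N, chi (a * (k : nat)%:Z) = chi a ^+ k.
  by move=> k; rewrite -chiMn -mulr_natr -natz.
rewrite (eq_bigr _ (fun k _ => e k)) {e}.
have [->|a0] := eqVneq a 0.
  by rewrite chi0 (eq_bigr (fun=> 1)) ?sumr_const ?card_ord // => k _; rewrite expr1n.
have w1 : chi a - 1 != 0.
  rewrite subr_eq0; case: a a0 aN => n; rewrite /= => n0 nN.
    by apply: chi_neq1; lia.
  rewrite NegzE chiN; apply/negP => /eqP h.
  have : chi (n.+1)%:Z == 1 by rewrite -[chi _]invrK h invr1.
  by apply/negP; apply: chi_neq1; lia.
have := subrX1 (chi a) N; rewrite chiXN subrr => /esym/eqP.
by rewrite mulf_eq0 (negPf w1) /= => /eqP.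
Qed.
End C2.

Section Inv.
Context {R : realType}.
Variables (N d : nat).
Hypothesis N0 : (0 < N)%N.
Local Notation chi := (chi R N).

Lemma dotZ_int (x m : ZNd N d) :
  (dotZ x m)%:Z = \sum_(i < d) ((x i : nat)%:Z * (m i : nat)%:Z).
Proof.
rewrite /dotZ (big_morph Posz PoszD (erefl _)).
by apply: eq_bigr => i _; rewrite PoszM.
Qed.

Lemma chi_sum (I : finType) (F : I -> int) :
  chi (\sum_i F i) = \prod_i chi (F i).
Proof. exact: (big_morph chi (chiD N) (chi0 N)). Qed.

Lemma kernel (x y : ZNd N d) :
  \sum_(m : ZNd N d) chi ((dotZ x m)%:Z - (dotZ y m)%:Z)
  = if x == y then N%:R ^+ d else 0.
Proof.
have e : forall m : ZNd N d, chi ((dotZ x m)%:Z - (dotZ y m)%:Z) =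
    \prod_(i < d) chi (((x i : nat)%:Z - (y i : nat)%:Z) * (m i : nat)%:Z).
  move=> m; rewrite !dotZ_int -sumrB -chi_sum; congr (chi _).
  by apply: eq_bigr => i _; rewrite mulrBl.
rewrite (eq_bigr _ (fun m _ => e m)) {e}.
rewrite -(bigA_distr_bigA (fun i (k : 'I_N) =>
   chi (((x i : nat)%:Z - (y i : nat)%:Z) * (k : nat)%:Z))) /=.
have e2 : forall i : 'I_d, \sum_(k < N) chi (((x i : nat)%:Z - (y i : nat)%:Z) * (k : nat)%:Z)
   = if x i == y i then N%:R else 0.
  move=> i; rewrite sum1d //; last first.
    by have := ltn_ord (x i); have := ltn_ord (y i); lia.
  by rewrite subr_eq0 eqz_nat.
rewrite (eq_bigr _ (fun i _ => e2 i)) {e2}.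
have [->|xy] := eqVneq x y.
  rewrite (eq_bigr (fun=> N%:R)); last by move=> i _; rewrite eqxx.
  by rewrite prodr_const card_ord.
have [i xyi] : exists i, x i != y i.
  apply/existsP; apply: contraR xy; rewrite negb_exists => /forallP h.
  by apply/eqP/ffunP => i; have := h i; rewrite negbK => /eqP.
by rewrite (bigD1 i) //= (negPf xyi) mul0r.
Qed.

Lemma inversion (f : ZNd N d -> R[i]) x :
  f x = \sum_m chi (dotZ x m)%:Z * fourier f m.
Proof.
rewrite /fourier.
have e : forall m : ZNd N d, chi (dotZ x m)%:Z * ((N%:R ^+ d)^-1 *
       \sum_y chi (- (dotZ y m)%:Z) * f y) =
    (N%:R ^+ d)^-1 * \sum_y f y * chi ((dotZ x m)%:Z - (dotZ y m)%:Z).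
  move=> m; rewrite mulrCA mulr_sumr; congr (_ * _).
  rewrite (eq_bigr (fun y => f y * chi ((dotZ x m)%:Z - (dotZ y m)%:Z))) // => y _.
  rewrite (chiD N); ring.
rewrite (eq_bigr _ (fun m _ => e m)) {e} -mulr_sumr exchange_big /=.
rewrite (eq_bigr (fun y => f y * if x == y then N%:R ^+ d else 0)); last first.
  by move=> y _; rewrite -mulr_sumr kernel.
rewrite (bigD1 x) //= eqxx big1 ?addr0; last first.
  by move=> y /negPf; rewrite eq_sym => ->; rewrite mulr0.
rewrite mulrCA mulVf ?mulr1 //.
by rewrite expf_neq0 // pnatr_eq0 -lt0n.
Qed.
End Inv.

Section Real.
Context {R : realType}.

Lemma powmean (T : finType) (S : {set T}) (a : T -> R) (r : R) :
  (0 < #|S|)%N -> (forall m, 0 <= a m) -> 1 <= r ->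
  (\sum_(m in S) a m) / #|S|%:R <=
  ((#|S|%:R)^-1 * \sum_(m in S) a m `^ r) `^ r^-1.
Proof.
move=> S0 a0 r1.
have r0 : 0 < r by apply: lt_le_trans r1.
have [->|r_neq1] := eqVneq r 1.
  rewrite invr1 powRr1; last first.
    by apply: mulr_ge0; [rewrite invr_ge0 | apply: sumr_ge0 => m _; apply: powR_ge0].
  rewrite [X in _ <= _ * X](eq_bigr a) => [|m _]; first by rewrite mulrC.
  by rewrite powRr1.
set n : R := #|S|%:R.
have n0 : 0 < n by rewrite ltr0n.
set A := \sum_(m in S) a m.
set Sq := \sum_(m in S) a m `^ r.
have A0 : 0 <= A by apply: sumr_ge0.
have Sq0 : 0 <= Sq by apply: sumr_ge0 => m _; apply: powR_ge0.
set mu := A / n.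
have mu0 : 0 <= mu by apply: divr_ge0 => //; apply: ltW.
have {}r1 : 1 < r by rewrite lt_neqAle eq_sym r_neq1.
suff key : mu `^ r <= n^-1 * Sq.
  have -> : mu = (mu `^ r) `^ r^-1.
    by rewrite -powRrM mulfV ?gt_eqF // powRr1.
  by apply: ge0_ler_powR => //; rewrite ?invr_ge0 ?ltW // ?nnegrE ?powR_ge0 //
    mulr_ge0 // invr_ge0 ltW.
have [mu_eq0|mup] := eqVneq mu 0.
  by rewrite mu_eq0 powR0 ?gt_eqF // mulr_ge0 // invr_ge0 ltW.
have {}mup : 0 < mu by rewrite lt_neqAle eq_sym mup.
pose q := r / (r - 1).
have r10 : 0 < r - 1 by rewrite subr_gt0.
have q0 : 0 < q by rewrite divr_gt0.
have pq : r^-1 + q^-1 = 1.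
  by rewrite /q invf_div; field; rewrite gt_eqF.
pose b := mu `^ (r - 1).
have bq : b `^ q = mu `^ r.
  have e : (r - 1) * q = r by rewrite /q; field; rewrite gt_eqF.
  by rewrite /b -powRrM e.
have young : forall m, a m * b <= a m `^ r / r + mu `^ r / q.
  by move=> m; rewrite -bq; apply: conjugate_powR => //; apply: powR_ge0.
have hs : A * b <= Sq / r + n * (mu `^ r / q).
  rewrite /A /Sq mulr_suml mulr_suml.
  apply: le_trans (ler_sum _ (fun m _ => young m)) _.
  by rewrite big_split /= sumr_const -/n mulr_natl.
have Ab : A * b = n * mu `^ r.
  have eA : A = n * mu by rewrite /mu mulrCA mulfV ?mulr1 // gt_eqF.
  have eb : mu * b = mu `^ r by rewrite /b mulr_powRB1.
  by rewrite eA -mulrA eb.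
rewrite Ab in hs.
set X := n * mu `^ r in hs.
have hX : X <= Sq.
  have e : X / q = X - X / r by rewrite /q invf_div; field; rewrite gt_eqF.
  rewrite mulrA -/X e in hs.
  have : X / r <= Sq / r by lra.
  by rewrite ler_pM2r // invr_gt0.
by rewrite ler_pdivlMl // -/X.
Qed.


Lemma lp_bound (T : finType) (E : {set T}) (h : T -> R) (r M : R) :
  1 <= r -> (forall x, 0 <= h x) -> (forall x, x \notin E -> h x = 0) ->
  (forall x, h x <= M) -> 0 <= M ->
  (\sum_x h x `^ r) `^ r^-1 <= #|E|%:R `^ r^-1 * M.
Proof.
move=> r1 h0 hE hM M0.
have r0 : 0 < r by apply: lt_le_trans r1.
have hs : \sum_x h x `^ r <= #|E|%:R * M `^ r.
  rewrite (bigID (mem E)) /= [X in _ + X]big1 ?addr0 => [|x xE]; last first.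
    by rewrite (hE x xE) powR0 // gt_eqF.
  have hx : forall x, h x `^ r <= M `^ r.
    by move=> x; apply: (ge0_ler_powR (ltW r0)); rewrite ?nnegrE.
  apply: le_trans (ler_sum _ (fun x _ => hx x)) _.
  by rewrite sumr_const mulr_natl.
have ir0 : 0 <= r^-1 by rewrite invr_ge0 ltW.
apply: le_trans (ge0_ler_powR ir0 _ _ hs) _.
- by rewrite nnegrE; apply: sumr_ge0 => x _; apply: powR_ge0.
- by rewrite nnegrE mulr_ge0 // powR_ge0.
rewrite powRM // ?powR_ge0 // -powRrM mulfV ?gt_eqF // powRr1 //.
Qed.

End Real.

Local Close Scope complex_scope.

Theorem theorem3 (R : realType) (N d : nat) (p q : \bar R) (C : R)
    (Sigma E : {set ZNd N d}) (f : ZNd N d -> R[i]) :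
  (2 <= N)%N -> (1 <= d)%N ->
  (1 <= p)%E -> (p <= q)%E ->
  Sigma != finset.set0 -> 0 < C ->
  restriction_estimate p q Sigma C ->
  (exists x, f x != 0) ->
  (forall x, x \notin E -> f x = 0) ->
  (forall m, m \notin Sigma -> fourier f m = 0) ->
  (N%:R ^+ d) / C <= (#|E|%:R `^ inv_exp p) * #|Sigma|%:R.
Proof.
move=> N2 d1 p1 pq Sne C0 hres [x0 fx0] fE fS.
have N0 : (0 < N)%N by apply: leq_trans N2.
have n0 : (0 < #|Sigma|)%N by rewrite card_gt0.
set n : R := #|Sigma|%:R.
have n0' : 0 < n by rewrite ltr0n.
pose fh := fun m => cabs (fourier f m).
pose M := \big[Num.max/0]_x cabs (f x).
have fh0 : forall m, 0 <= fh m by move=> m; apply: cabs_ge0.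
have st1 : forall x, cabs (f x) <= \sum_(m in Sigma) fh m.
  move=> x; rewrite {1}(@inversion R N d N0 f x).
  apply: le_trans (cabs_sum _ _ _) _.
  rewrite (bigID (mem Sigma)) /= [X in _ + X]big1 ?addr0 => [|m mS]; last first.
    by rewrite fS // mulr0; apply/eqP; rewrite cabs_eq0.
  by apply: ler_sum => m _; rewrite cabsM cabs_chi mul1r.
have st2' : forall q', (1 <= q')%E -> \sum_(m in Sigma) fh m <= n * lq_avg q' Sigma fh.
  case=> [r| |] pq'.
  - have r1 : 1 <= r by rewrite -lee_fin.
    rewrite /= -ler_pdivrMl // mulrC.
    exact: powmean.
  - rewrite /=; set B := \big[Num.max/0]_(m in Sigma) fh m.
    have hB : forall m, m \in Sigma -> fh m <= B.
      by move=> m mS; exact: le_bigmax_cond.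
    apply: le_trans (ler_sum _ hB) _.
    by rewrite sumr_const mulr_natl.
  - by [].
set L := lq_avg q Sigma fh.
have st2 : \sum_(m in Sigma) fh m <= n * L by apply: st2'; apply: le_trans pq.
have st3 : L <= C * (N%:R ^+ d)^-1 * lp_sum p (fun x => cabs (f x)) := hres f.
clear hres.
have M0 : 0 <= M.
  by apply: le_trans (le_bigmax _ _ x0); apply: cabs_ge0.
have fM : forall x, cabs (f x) <= M by move=> x; apply: le_bigmax.
have st4 : lp_sum p (fun x => cabs (f x)) <= #|E|%:R `^ inv_exp p * M.
  case: p p1 pq st3 => [r| |] p1 pq st3.
  - have r1 : 1 <= r by rewrite -lee_fin.
    apply: lp_bound => //; first by move=> x; exact: cabs_ge0.
    by move=> x xE; rewrite fE //; apply/eqP; rewrite cabs_eq0.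
  - by rewrite /= powRr0 mul1r.
  - by [].
set Ee := #|E|%:R `^ inv_exp p in st4.
set D : R := N%:R ^+ d.
have D0 : 0 < D by rewrite exprn_gt0 // ltr0n.
set K := n * (C * D^-1 * (Ee * M)).
have K0 : 0 <= K.
  have Ee0 : 0 <= Ee by rewrite /Ee powR_ge0.
  apply: mulr_ge0; first exact: ltW.
  apply: mulr_ge0; last exact: mulr_ge0.
  by apply: mulr_ge0; [exact: ltW | rewrite invr_ge0 ltW].
have hK : forall x, cabs (f x) <= K.
  move=> x; apply: le_trans (st1 x) _; apply: le_trans st2 _.
  rewrite ler_pM2l //; apply: le_trans st3 _.
  rewrite ler_pM2l ?mulr_gt0 ?invr_gt0 //.
have MK : M <= K by apply: bigmax_le.
have Mp : 0 < M.
  apply: lt_le_trans (fM x0); rewrite lt_neqAle cabs_ge0 andbT eq_sym.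
  by rewrite cabs_eq0.
have Ee0 : 0 <= Ee by rewrite /Ee powR_ge0.
have h1 : 1 <= n * C * D^-1 * Ee.
  rewrite -(ler_pM2r Mp) mul1r; apply: le_trans MK _.
  by rewrite /K !mulrA.
rewrite ler_pdivrMr //.
have h2 : D * 1 <= D * (n * C / D * Ee) by rewrite ler_pM2l.
rewrite mulr1 in h2; apply: le_trans h2 _.
have -> : D * (n * C / D * Ee) = Ee * n * C by field; rewrite gt_eqF.
by [].
Qed.
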